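(* Let $X$ be a finite topological space and $x,y\in X$ with $\Psi(x,y)=k$. If $(U_j)_{j\ge0}$ is any nested sequence of open sets around $x$ with $y\in U_k$, then $U_k=U_x\cup U_y$.
   Context: For a finite topological space $X$ and $x\in X$, $U_x$ denotes the minimal open set containing $x$ (the intersection of all open sets containing $x$). A nested sequence of open sets around $x$ is a finite sequence $U_0\subsetneq U_1\subsetneq\cdots\subsetneq U_m=X$ of open sets with $U_0=U_x$ such that for each $j$ there is no open set $V$ with $U_j\subsetneq V\subsetneq U_{j+1}$. The furtherness function $\Psi:X\times X\to\{0,1,\dots,|X|-1\}$ is defined by: $\Psi(x,y)$ is the smallest integer $k\ge 0$ such that there exists a nested sequence $(U_j)_{j\ge0}$ of open sets around $x$ with $y\in U_k$. *)

(* Defs.v *)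
(* A finite topological space is a finType T together with
   its family of open sets O : {set {set T}}. *)
From mathcomp Require Import all_boot.
Set Implicit Arguments. Unset Strict Implicit. Unset Printing Implicit Defensive.

Section FiniteTop.
Variable T : finType.

(* O is a topology on the (finite) set T: contains the empty and full sets and
   is closed under (binary, hence all finite = all) unions and intersections. *)
Definition is_topology (O : {set {set T}}) : Prop :=
  [/\ set0 \in O, setT \in O,
      (forall U V, U \in O -> V \in O -> U :|: V \in O) &
      (forall U V, U \in O -> V \in O -> U :&: V \in O)].

Definition minOpen (O : {set {set T}}) (x : T) : {set T} :=
  \bigcap_(U in O | x \in U) U.

Definition nested_seq (O : {set {set T}}) (x : T) (s : seq {set T}) : Prop :=
  [/\ 0 < size s,
      nth set0 s 0 = minOpen O x,
      last set0 s = setT,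
      (forall j, j < size s -> nth set0 s j \in O) &
      (forall j, j.+1 < size s ->
         nth set0 s j \proper nth set0 s j.+1 /\
         ~ (exists V, [/\ V \in O, nth set0 s j \proper V &
                          V \proper nth set0 s j.+1]))].

(* Psi(x,y) = k : k is the smallest integer such that some nested sequence
   (U_j) around x has y \in U_k. *)
Definition furtherness_is (O : {set {set T}}) (x y : T) (k : nat) : Prop :=
  (exists s, nested_seq O x s /\ k < size s /\ y \in nth set0 s k) /\
  (forall s k', nested_seq O x s -> k' < size s -> y \in nth set0 s k' ->
     k <= k').

End FiniteTop.

(* Main.v *)
Require Import Defs.
From mathcomp Require Import all_boot.

Definition cov {T : finType} (O : {set {set T}}) (A B : {set T}) : bool :=
  [&& A \in O, B \in O, A \proper B &
      [forall V : {set T}, ~~ [&& V \in O, A \proper V & V \proper B]]].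

Definition weak {T : finType} (O : {set {set T}}) (A B : {set T}) : bool :=
  (A == B) || cov O A B.

Lemma cov_mid {T : finType} (O : {set {set T}}) A B W :
  cov O A B -> W \in O -> A \subset W -> W \subset B -> W = A \/ W = B.
Proof.
case/and4P=> _ _ _ /forallP /(_ W) H WO AW WB.
have [->|nWA] := eqVneq W A; first by left.
have [->|nWB] := eqVneq W B; first by right.
exfalso; move: H; rewrite WO /= !properEneq eq_sym nWA AW nWB WB.
by [].
Qed.
Arguments cov_mid {T O A B W}.


Lemma cov_intro {T : finType} (O : {set {set T}}) A B :
  A \in O -> B \in O -> A \proper B ->
  (forall W, W \in O -> A \subset W -> W \subset B -> W = A \/ W = B) ->
  cov O A B.
Proof.
move=> AO BO AB H; rewrite /cov AO BO AB /=; apply/forallP=> W.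
apply/negP=> /and3P[WO AW WB].
have [e|e] := H W WO (proper_sub AW) (proper_sub WB).
  by move: AW; rewrite e properxx.
by move: WB; rewrite e properxx.
Qed.

Lemma minOpen_open {T : finType} (O : {set {set T}}) y :
  is_topology O -> minOpen O y \in O.
Proof.
case=> _ TO _ IO; rewrite /minOpen.
apply: (big_ind (fun S => S \in O)) => //.
  all: try by move=> U /andP[].
all: by move=> U V HU HV; apply: IO.
Qed.
Arguments minOpen_open {T O}.


Lemma minOpen_in {T : finType} (O : {set {set T}}) y : y \in minOpen O y.
Proof. by apply/bigcapP=> U /andP[]. Qed.
Arguments minOpen_in {T} O y.


Lemma minOpen_sub {T : finType} (O : {set {set T}}) y U :
  U \in O -> y \in U -> minOpen O y \subset U.
Proof. by move=> UO yU; apply: (bigcap_inf U); rewrite UO yU. Qed.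

Lemma weak_meet {T : finType} (O : {set {set T}}) V X Y :
  is_topology O -> V \in O -> cov O X Y -> weak O (X :&: V) (Y :&: V).
Proof.
move=> top VO cXY; have [_ _ _ IO] := top.
have cXY' := cXY; case/and4P: cXY' => XO YO XY _.
rewrite /weak; have [//|ne] := eqVneq (X :&: V) (Y :&: V); rewrite /=.
apply: cov_intro; [exact: IO|exact: IO| |].
  by rewrite properEneq ne setSI // proper_sub.
move=> W WO sXW sWY.
have [_ _ UO _] := top.
have := cov_mid cXY (UO _ _ WO XO) (subsetUr _ _) _.
have WY : W \subset Y by apply: subset_trans sWY (subsetIl _ _).
have WV : W \subset V by apply: subset_trans sWY (subsetIr _ _).
rewrite subUset WY (proper_sub XY) => /(_ isT) [e|e].
  left; apply/eqP; rewrite eqEsubset sXW andbT subsetI WV andbT.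
  by rewrite -e subsetUl.
right; apply/eqP; rewrite eqEsubset sWY /= -e setIUl.
by rewrite subUset (setIidPl WV) subxx.
Qed.
Arguments weak_meet {T O V X Y}.


Lemma dedup {T : finType} (O : {set {set T}}) a p :
  path (weak O) a p ->
  exists q, [/\ path (cov O) a q, last a q = last a p & size q <= size p].
Proof.
elim: p a => [|b p IH] a /=; first by move=> _; exists [::].
case/andP=> /orP[/eqP <-|cab] /IH[q [Pq Lq Sq]].
  by exists q; split => //; apply: leqW.
by exists (b :: q); rewrite /= cab Pq Lq.
Qed.
Arguments dedup {T O a p}.


Lemma map_weak {T : finType} (O : {set {set T}}) V a p :
  is_topology O -> V \in O -> path (cov O) a p ->
  path (weak O) (a :&: V) (map (fun Z => Z :&: V) p).
Proof.
move=> top VO; elim: p a => [|b p IH] a //= /andP[cab Pp].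
by rewrite weak_meet // IH.
Qed.
Arguments map_weak {T O V a p}.


Lemma core {T : finType} (O : {set {set T}}) y (top : is_topology O) :
  forall k A s, A \in O -> path (cov O) A s -> last A s = setT ->
  k <= size s -> y \in nth set0 (A :: s) k ->
  (forall t j, path (cov O) A t -> last A t = setT -> j <= size t ->
     y \in nth set0 (A :: t) j -> k <= j) ->
  nth set0 (A :: s) k = A :|: minOpen O y.
Proof.
have UyO := minOpen_open y top.
have [_ _ UO IO] := top.
elim=> [|k IH] A s AO Ps Ls Hk yk Hmin.
  move: yk => /= yA; apply/esym/setUidPl; exact: minOpen_sub.
case: s Ps Ls Hk yk Hmin => [|B s'] //= /andP[cAB Ps'] Ls' Hk yk Hmin.
have cAB' := cAB; case/and4P: cAB' => _ BO AB _.
have IHk := IH B s' BO Ps' Ls' Hk yk.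
have eC : nth set0 (B :: s') k = B :|: minOpen O y.
  apply: IHk => t j Pt Lt Hj yj.
  have := Hmin (B :: t) j.+1; rewrite /= cAB Pt => /(_ isT Lt Hj yj).
  by [].
rewrite eC; set V := A :|: minOpen O y; set C := B :|: minOpen O y.
have yC : y \in C by rewrite /C -eC.
have UyC : minOpen O y \subset C by rewrite subsetUr.
have BC : B \subset C by rewrite subsetUl.
have AC : A \subset C := subset_trans (proper_sub AB) BC.
have VO : V \in O by apply: UO.
have CO : C \in O by apply: UO.
have [BV|nBV] := boolP (B \subset V).
  apply/eqP; rewrite eqEsubset subUset BV subsetUr /=.
  by rewrite subUset AC UyC.
exfalso.
have VC : V \subset C by rewrite subUset AC UyC.
have cVC : cov O V C.
  apply: cov_intro => //.
    rewrite properEneq VC andbT; apply/eqP=> e; move: nBV; by rewrite e BC.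
  move=> W WO VW WC.
  have UyW : minOpen O y \subset W := subset_trans (subsetUr _ _) VW.
  have AW : A \subset W := subset_trans (subsetUl _ _) VW.
  have h1 : A \subset W :&: B by rewrite subsetI AW proper_sub.
  have [e|e] := cov_mid cAB (IO _ _ WO BO) h1 (subsetIr _ _).
    left; apply/eqP; rewrite eqEsubset VW andbT.
    have -> : W = W :&: C by apply/esym/setIidPl.
    by rewrite /C setIUr e (setIidPr UyW).
  right; apply/eqP; rewrite eqEsubset WC /= /C subUset UyW andbT.
  by rewrite -e subsetIl.
have BVA : B :&: V = A.
  have h1 : A \subset B :&: V by rewrite subsetI (proper_sub AB) subsetUl.
  have [e|e] := cov_mid cAB (IO _ _ BO VO) h1 (subsetIl _ _) => //.
  by move: nBV; rewrite -e subsetIr.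
set s1 := take k s'; set s2 := drop k s'.
have es' : s' = s1 ++ s2 by rewrite cat_take_drop.
have sz1 : size s1 = k by rewrite size_take_min; apply/minn_idPl.
have L1 : last B s1 = C.
  by rewrite /C -eC es' (last_nth set0) -cat_cons nth_cat /= sz1 ltnSn.
move: Ps'; rewrite es' cat_path => /andP[P1 P2].
have := map_weak top VO P1.
rewrite BVA => /dedup [q [Pq Lq Sq]].
have {}Lq : last A q = V.
  by rewrite Lq -{1}BVA (last_map (fun Z => Z :&: V)) L1 (setIidPr VC).
have Pt : path (cov O) A (q ++ C :: s2).
  by rewrite cat_path Pq Lq /= cVC -L1 P2.
have Lt : last A (q ++ C :: s2) = setT.
  by rewrite last_cat Lq /= -L1 -last_cat -es' Ls'.
have Hj : size q <= size (q ++ C :: s2) by rewrite size_cat leq_addr.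
have yj : y \in nth set0 (A :: q ++ C :: s2) (size q).
  rewrite -cat_cons nth_cat /= ltnSn -(last_nth set0) Lq.
  by rewrite in_setU minOpen_in orbT.
have := Hmin _ _ Pt Lt Hj yj.
rewrite size_map sz1 in Sq.
by move=> H; move: (leq_trans H Sq); rewrite ltnn.
Qed.

Theorem mainTheorem5 (T : finType) (O : {set {set T}}) (x y : T) (k : nat)
  (s : seq {set T}) :
  is_topology O ->
  furtherness_is O x y k ->
  nested_seq O x s ->
  k < size s ->
  y \in nth set0 s k ->
  nth set0 s k = minOpen O x :|: minOpen O y.
Proof.
move=> top [_ Hmin] [Hsz H0 Hl Hop Hst] Hk yk.
case: s Hsz H0 Hl Hop Hst Hk yk Hmin => [|a s'] // _ /= H0 Hl Hop Hst Hk yk Hmin.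
subst a.
have UxO := minOpen_open x top.
have toPath : forall t, (forall j, j.+1 < size (minOpen O x :: t) ->
      nth set0 (minOpen O x :: t) j \proper nth set0 (minOpen O x :: t) j.+1 /\
      ~ (exists V, [/\ V \in O, nth set0 (minOpen O x :: t) j \proper V &
               V \proper nth set0 (minOpen O x :: t) j.+1])) ->
      (forall j, j < size (minOpen O x :: t) -> nth set0 (minOpen O x :: t) j \in O) ->
      path (cov O) (minOpen O x) t.
  move=> t Hs Ho; apply/(pathP set0) => i Hi.
  have [pr nV] := Hs i Hi.
  have h1 := Ho i (ltnW Hi); have h2 : nth set0 t i \in O := Ho i.+1 Hi.
  rewrite /cov h1 h2 pr /=.
  apply/forallP=> W; apply/negP=> /and3P[WO p1 p2]; apply: nV; by exists W.
apply: core => //.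
- by apply: toPath.
move=> t j Pt Lt Hj yj.
apply: (Hmin (minOpen O x :: t) j) => //.
split => //.
- move=> i; case: i => [|i] //= Hi.
  by move/(pathP set0): Pt => /(_ i Hi); case/and4P.
- move=> i /= Hi; move/(pathP set0): Pt => /(_ i Hi) /and4P[_ _ pr /forallP nV].
  split => //; case=> W [WO p1 p2]; move: (nV W); by rewrite WO p1 p2.
Qed.
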